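(* For every integer $n\geq 3$, $$\dot{\imath}_{[1,2]}(P_3\Box P_n)=\begin{cases}\left\lfloor \frac{3n+8}{4}\right\rfloor & \text{if } n\equiv 2 \pmod 4,\\[2pt] \left\lfloor \frac{3n+4}{4}\right\rfloor & \text{otherwise.}\end{cases}$$
   Context: $P_k$ denotes the path on $k$ vertices and $P_m\Box P_n$ the Cartesian product of two paths (the $m\times n$ grid graph). A set $S$ of vertices of a graph $G$ is independent if no two vertices of $S$ are adjacent, and dominating if every vertex not in $S$ has at least one neighbor in $S$. An independent $[1,2]$-set of $G$ is an independent dominating set $S$ such that every vertex $v\in V(G)\setminus S$ has at least one and at most two neighbors in $S$. When $G$ has an independent $[1,2]$-set, $\dot{\imath}_{[1,2]}(G)$ denotes the minimum cardinality of an independent $[1,2]$-set of $G$ (the statement includes the existence of such a set). *)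

(* Defs.v *)
From mathcomp Require Import all_boot.
Set Implicit Arguments. Unset Strict Implicit. Unset Printing Implicit Defensive.

Definition nbhd (T : finType) (adj : rel T) (v : T) : {set T} := [set u | adj v u].

Definition independent (T : finType) (adj : rel T) (S : {set T}) : Prop :=
  forall u v, u \in S -> v \in S -> ~~ adj u v.

Definition indep12_set (T : finType) (adj : rel T) (S : {set T}) : Prop :=
  independent adj S /\
  forall v, v \notin S -> 1 <= #|nbhd adj v :&: S| <= 2.

Definition i12_number_is (T : finType) (adj : rel T) (k : nat) : Prop :=
  (exists S : {set T}, indep12_set adj S /\ #|S| = k) /\
  (forall S : {set T}, indep12_set adj S -> k <= #|S|).

Definition path_adj (k : nat) : rel 'I_k :=
  fun i j => (i.+1 == j :> nat) || (j.+1 == i :> nat).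

Definition grid_adj (m n : nat) : rel ('I_m * 'I_n) :=
  fun x y => ((x.1 == y.1) && path_adj x.2 y.2)
          || ((x.2 == y.2) && path_adj x.1 y.1).

(* Main.v *)
Require Import Defs.
From mathcomp Require Import all_boot zify.
Set Implicit Arguments. Unset Strict Implicit. Unset Printing Implicit Defensive.

Definition bit (i c : nat) : bool := odd (c %/ 2 ^ i).
Definition vcond (s : bool) (k : nat) : bool := if s then k == 0 else (1 <= k <= 2).
Definition ok3 (a b c : nat) : bool :=
  [&& vcond (bit 0 b) (bit 0 c + bit 0 a + (bit 1 b + false)),
      vcond (bit 1 b) (bit 1 c + bit 1 a + (bit 2 b + bit 0 b)) &
      vcond (bit 2 b) (bit 2 c + bit 2 a + (false + bit 1 b))].
Definition pop (c : nat) : nat := bit 0 c + bit 1 c + bit 2 c.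

Definition omin (x y : option nat) : option nat :=
  match x, y with
  | None, _ => y
  | _, None => x
  | Some a, Some b => Some (minn a b)
  end.
Definition oadd (p : nat) (x : option nat) : option nat := omap (addn p) x.
Definition ole (x : option nat) (m : nat) : Prop :=
  match x with Some a => a <= m | None => False end.

Definition stepv (v : seq (option nat)) : seq (option nat) :=
  mkseq (fun s => foldr omin None
     [seq oadd (pop c) (nth None v (8 * (s %% 8) + c)) | c <- iota 0 8 & ok3 (s %/ 8) (s %% 8) c]) 64.
Definition E0 : seq (option nat) :=
  mkseq (fun s => if ok3 (s %/ 8) (s %% 8) 0 then Some 0 else None) 64.
Definition Ev (m : nat) := iter m stepv E0.
Definition ans (n : nat) : option nat :=
  foldr omin None [seq oadd (pop b) (nth None (Ev n.-1) b) | b <- iota 0 8].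
Definition Ff (n : nat) := if n %% 4 == 2 then (3 * n + 8) %/ 4 else (3 * n + 4) %/ 4.

Lemma per : Ev 10 = map (oadd 3) (Ev 6). Proof. vm_compute. reflexivity. Qed.
Lemma small : [seq ans n | n <- iota 3 8] = [seq Some (Ff n) | n <- iota 3 8].
Proof. vm_compute. reflexivity. Qed.

Lemma omin_oadd c x y : omin (oadd c x) (oadd c y) = oadd c (omin x y).
Proof. case: x => [a|]; case: y => [b|] //=; by rewrite addn_minr. Qed.
Lemma oaddC p c x : oadd p (oadd c x) = oadd c (oadd p x).
Proof. case: x => //= a; congr Some; lia. Qed.
Lemma foldr_oadd c (l : seq (option nat)) :
  foldr omin None (map (oadd c) l) = oadd c (foldr omin None l).
Proof. elim: l => //= x l ->; by rewrite omin_oadd. Qed.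
Lemma nth_oadd c v i : nth None (map (oadd c) v) i = oadd c (nth None v i).
Proof. elim: v i => [|x v IH] [|i] //=. Qed.

Lemma step_shift c v : stepv (map (oadd c) v) = map (oadd c) (stepv v).
Proof.
rewrite /stepv /mkseq -map_comp; apply: eq_map => s /=.
rewrite -foldr_oadd -map_comp; congr foldr; apply: eq_map => x /=.
by rewrite nth_oadd oaddC.
Qed.

Lemma Ev_per m : 6 <= m -> Ev (m + 4) = map (oadd 3) (Ev m).
Proof.
elim: m => // m IH; rewrite leq_eqVlt => /orP[/eqP<-|]; first exact: per.
move=> lt; rewrite addSn /Ev iterS -/(Ev (m + 4)) IH // step_shift.
by rewrite /Ev iterS.
Qed.

Lemma ans_per n : 7 <= n -> ans (n + 4) = oadd 3 (ans n).
Proof.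
move=> hn; rewrite /ans -foldr_oadd -map_comp.
have -> : (n + 4).-1 = n.-1 + 4 by lia.
rewrite Ev_per; last by lia.
congr foldr; apply: eq_map => b /=; by rewrite nth_oadd oaddC.
Qed.

Lemma ans_F n : 3 <= n -> ans n = Some (Ff n).
Proof.
elim/ltn_ind: n => n IH hn.
case: (leqP n 10) => h10.
  have : n \in iota 3 8 by rewrite mem_iota; lia.
  move: small; move: n {IH hn h10}; move: (iota 3 8) => s.
  elim: s => [//|x s IHs] /=.
  move=> n [] e1 e2; rewrite in_cons => /orP[/eqP->//|]; exact: IHs.
have -> : n = (n - 4) + 4 by lia.
rewrite ans_per; last by lia.
have h4 : n - 4 < n by lia.
have h3 : 3 <= n - 4 by lia.
rewrite (IH _ h4 h3) /= /Ff; congr Some.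
have -> : (n - 4 + 4) %% 4 = (n - 4) %% 4 by lia.
case: eqP => _; lia.
Qed.

Definition colp (col : nat -> nat) (j : nat) : nat := if j is j'.+1 then col j' else 0.

Lemma ole_omin_l x y m : ole x m -> ole (omin x y) m.
Proof. case: x => [a|] //; case: y => [b|] /= h //; by rewrite geq_min h. Qed.
Lemma ole_omin_r x y m : ole y m -> ole (omin x y) m.
Proof. case: x => [a|] //; case: y => [b|] /= h //; by rewrite geq_min h orbT. Qed.
Lemma ole_foldr x l m : x \in l -> ole x m -> ole (foldr omin None l) m.
Proof.
elim: l => // y l IH; rewrite in_cons => /orP[/eqP<- h|h1 h2] /=.
  exact: ole_omin_l.
apply: ole_omin_r; exact: IH.
Qed.
Lemma ole_oadd p x m : ole x m -> ole (oadd p x) (p + m).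
Proof. case: x => //= a h; lia. Qed.

Lemma lb_aux n col (hc : forall j, col j < 8) (h0 : forall j, n <= j -> col j = 0)
  (hw : forall j, j < n -> ok3 (colp col j) (col j) (col j.+1)) :
  forall m j, j + m.+1 = n ->
  ole (nth None (Ev m) (8 * colp col j + col j)) (\sum_(j.+1 <= i < n) pop (col i)).
Proof.
have hp : forall j, colp col j < 8 by case.
elim=> [|m IH] j hj.
  rewrite /Ev /= /E0 nth_mkseq; last by have := hc j; have := hp j; lia.
  have -> : (8 * colp col j + col j) %/ 8 = colp col j by have := hc j; lia.
  have -> : (8 * colp col j + col j) %% 8 = col j by have := hc j; lia.
  have := hw j; rewrite (h0 j.+1); last by lia.
  move=> -> /=; last by lia.
  by [].
rewrite /Ev iterS -/(Ev m) /stepv nth_mkseq; last by have := hc j; have := hp j; lia.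
have -> : (8 * colp col j + col j) %/ 8 = colp col j by have := hc j; lia.
have -> : (8 * colp col j + col j) %% 8 = col j by have := hc j; lia.
rewrite big_ltn; last by lia.
apply: (ole_foldr (x := oadd (pop (col j.+1)) (nth None (Ev m) (8 * col j + col j.+1)))).
  apply/mapP; exists (col j.+1) => //.
  rewrite mem_filter mem_iota hw ?hc //; lia.
apply: ole_oadd; apply: (IH j.+1); lia.
Qed.

Lemma lb n col (hc : forall j, col j < 8) (h0 : forall j, n <= j -> col j = 0)
  (hw : forall j, j < n -> ok3 (colp col j) (col j) (col j.+1)) (hn : 0 < n) :
  ole (ans n) (\sum_(0 <= i < n) pop (col i)).
Proof.
rewrite big_ltn //.
apply: (ole_foldr (x := oadd (pop (col 0)) (nth None (Ev n.-1) (col 0)))).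
  apply/mapP; exists (col 0) => //; rewrite mem_iota; have := hc 0; lia.
apply: ole_oadd.
have := lb_aux hc h0 hw (m := n.-1) (j := 0); apply; lia.
Qed.

Section Grid.
Variable n : nat.
Variable S : {set 'I_3 * 'I_n}.

Definition mS (i j : nat) : bool :=
  [exists x in S, (x.1 == i :> nat) && (x.2 == j :> nat)].

Lemma mSE (x : 'I_3 * 'I_n) : mS x.1 x.2 = (x \in S).
Proof.
apply/existsP/idP => [[y /andP[yS /andP[/eqP e1 /eqP e2]]]|xS].
  have -> : x = y by case: x y e1 e2 yS => [a b] [c d] /= e1 e2 _; congr pair; apply: val_inj.
  done.
by exists x; rewrite xS !eqxx.
Qed.

Lemma mS_out i j : (3 <= i) || (n <= j) -> mS i j = false.
Proof.
move=> h; apply/existsP => [[[a b] /andP[_ /andP[/eqP e1 /eqP e2]]]].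
have := ltn_ord a; have := ltn_ord b; rewrite /= in e1 e2; lia.
Qed.

Lemma sum_eq0 m (k : nat) (g : nat -> bool) :
  \sum_(b < m) ((k == b :> nat) && g b) = (k < m) && g k.
Proof.
elim: m => [|m IH]; first by rewrite big_ord0.
rewrite big_ord_recr /= IH.
case: eqP => [->|ne].
  by rewrite ltnn ltnSn.
by rewrite addn0 ltnS [k <= m]leq_eqVlt (introF eqP ne).
Qed.

Lemma sum_eq1 m (k : nat) (g : nat -> bool) (hg : forall b, m <= b -> g b = false) :
  \sum_(b < m) ((k == b :> nat) && g b) = g k.
Proof. rewrite sum_eq0; case: (ltnP k m) => // h; by rewrite hg. Qed.

Lemma sum_eq2 m (k : nat) (g : nat -> bool) (hg : forall b, m <= b -> g b = false) :
  \sum_(b < m) ((b.+1 == k :> nat) && g b) = (0 < k) && g k.-1.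
Proof.
case: k => [|k].
  by rewrite big1.
rewrite -(sum_eq1 k hg); apply: eq_bigr => b _; by rewrite eqSS eq_sym.
Qed.

Definition Nc (i j : nat) : nat :=
  mS i j.+1 + ((0 < j) && mS i j.-1) + (mS i.+1 j + ((0 < i) && mS i.-1 j)).

Lemma split_pt (j b : nat) (p r g : bool) :
  nat_of_bool (((p && ((j.+1 == b) || (b.+1 == j))) || ((j == b) && r)) && g)
  = p * ((j.+1 == b) && g) + p * ((b.+1 == j) && g) + r * ((j == b) && g).
Proof.
case: p; case: r; case: g => /=; rewrite ?andbF ?muln0 ?mul0n ?mul1n //;
case: (j.+1 =P b); case: (b.+1 =P j); case: (j =P b) => /=; lia.
Qed.

Lemma nbE (v : 'I_3 * 'I_n) : #|nbhd (@grid_adj 3 n) v :&: S| = Nc v.1 v.2.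
Proof.
rewrite -sum1_card big_mkcond /=.
rewrite (eq_bigr (fun p : 'I_3 * 'I_n =>
   nat_of_bool ((((v.1 == p.1 :> nat) && ((v.2.+1 == p.2 :> nat) || (p.2.+1 == v.2 :> nat)))
      || ((v.2 == p.2 :> nat) && path_adj v.1 p.1)) && mS p.1 p.2))); last first.
  move=> [a b] _; rewrite mSE inE /nbhd inE /grid_adj /=.
  by case: ifP.
rewrite -(pair_bigA _ (fun (a : 'I_3) (b : 'I_n) => nat_of_bool ((((v.1 == a :> nat) && ((v.2.+1 == b :> nat) || (b.+1 == v.2 :> nat)))
      || ((v.2 == b :> nat) && path_adj v.1 a)) && mS a b))) /=.
rewrite (eq_bigr (fun a : 'I_3 => (v.1 == a :> nat) * (mS a v.2.+1 + ((0 < v.2) && mS a v.2.-1))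
                     + path_adj v.1 a * mS a v.2)); last first.
  move=> a _.
  rewrite (eq_bigr _ (fun (b : 'I_n) _ => split_pt v.2 b (v.1 == a :> nat) (path_adj v.1 a) (mS a b))).
  have hg : forall b, n <= b -> mS a b = false by move=> b hb; apply: mS_out; rewrite hb orbT.
  rewrite !big_split /= -!big_distrr /= sum_eq1 // sum_eq2 // sum_eq1 //.
  by rewrite mulnDr.
case: v => [[[|[|[|i]]] hi] [j hj]] //=;
rewrite !big_ord_recl big_ord0 /= /path_adj /= ?(@mS_out 3) //.
all: rewrite /bump /Nc /= ?(@mS_out 3) // ?addn0 ?mul0n ?mul1n ?add0n ?addn0 //;
rewrite (_ : 1 + 1 = 2) //; lia.
Qed.

Lemma indep12E : indep12_set (@grid_adj 3 n) S <->
  forall v, vcond (v \in S) #|nbhd (@grid_adj 3 n) v :&: S|.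
Proof.
split.
  move=> [hi h12] v; rewrite /vcond; case: ifP => vS; last by apply: h12; rewrite vS.
  rewrite cards_eq0; apply/eqP/setP => u; rewrite !inE.
  by apply/negbTE; apply/negP => /andP[a uS]; move: (hi _ _ vS uS); rewrite a.
move=> h; split.
  move=> u v uS vS; apply/negP => a.
  have := h u; rewrite uS /= cards_eq0 => /eqP/setP/(_ v); by rewrite !inE a vS.
move=> v vn; have := h v; by rewrite /vcond (negbTE vn).
Qed.

Definition code (x y z : bool) : nat := x + 2 * y + 4 * z.
Lemma bit0c x y z : bit 0 (code x y z) = x. Proof. by case: x; case: y; case: z. Qed.
Lemma bit1c x y z : bit 1 (code x y z) = y. Proof. by case: x; case: y; case: z. Qed.
Lemma bit2c x y z : bit 2 (code x y z) = z. Proof. by case: x; case: y; case: z. Qed.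
Lemma code_lt x y z : code x y z < 8. Proof. by case: x; case: y; case: z. Qed.

Definition colS (j : nat) := code (mS 0 j) (mS 1 j) (mS 2 j).

Lemma okE j : ok3 (colp colS j) (colS j) (colS j.+1) =
  [&& vcond (mS 0 j) (Nc 0 j), vcond (mS 1 j) (Nc 1 j) & vcond (mS 2 j) (Nc 2 j)].
Proof.
rewrite /ok3 /colS !bit0c !bit1c !bit2c /Nc (@mS_out 3) //.
case: j => [|j] /=; rewrite ?bit0c ?bit1c ?bit2c //.
Qed.

Lemma windowsE : indep12_set (@grid_adj 3 n) S <->
  forall j, j < n -> ok3 (colp colS j) (colS j) (colS j.+1).
Proof.
rewrite indep12E; split.
  move=> h j hj; rewrite okE.
  have := h (Ordinal (isT : 0 < 3), Ordinal hj); rewrite -mSE nbE /= => ->.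
  have := h (Ordinal (isT : 1 < 3), Ordinal hj); rewrite -mSE nbE /= => ->.
  by have := h (Ordinal (isT : 2 < 3), Ordinal hj); rewrite -mSE nbE /= => ->.
move=> h [[i hi] [j hj]]; rewrite -mSE nbE /=.
have := h j hj; rewrite okE => /and3P[h0 h1 h2].
by case: i hi => [|[|[|i]]].
Qed.

Lemma cardS_sum : #|S| = \sum_(0 <= j < n) pop (colS j).
Proof.
rewrite -sum1_card big_mkcond /=.
rewrite (eq_bigr (fun p : 'I_3 * 'I_n => nat_of_bool (mS p.1 p.2))); last first.
  by move=> p _; rewrite mSE; case: ifP.
rewrite -(pair_bigA _ (fun (a : 'I_3) (b : 'I_n) => nat_of_bool (mS a b))) /=.
rewrite exchange_big big_mkord; apply: eq_bigr => b _.
rewrite !big_ord_recl big_ord0 /pop /colS !bit0c !bit1c !bit2c /bump /=.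
by rewrite /bump /= ?addn0 ?add0n addnA.
Qed.
End Grid.

Fixpoint validR (a : nat) (cs : seq nat) (c : nat) : bool :=
  match cs with [::] => true | x :: r => ok3 a x (head c r) && validR x r c end.

Lemma validR_nth a cs c : validR a cs c -> forall j, j < size cs ->
  ok3 (nth 0 (a :: cs) j) (nth 0 cs j) (nth c (rcons cs c) j.+1).
Proof.
elim: cs a => [|x r IH] a //= /andP[h1 h2] [|j] hj /=.
  by case: r {IH h2 hj} h1.
exact: IH.
Qed.

Lemma validR_cat a s1 s2 c :
  validR a (s1 ++ s2) c = validR a s1 (head c s2) && validR (last a s1) s2 c.
Proof.
elim: s1 a => [|x r IH] a //=.
rewrite IH andbA; congr (_ && _ && _); by case: r {IH}.
Qed.

Lemma sum_nth (F : nat -> nat) s :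
  \sum_(0 <= j < size s) F (nth 0 s j) = sumn (map F s).
Proof.
elim: s => [|x s IH]; first by rewrite big_geq.
by rewrite /= big_nat_recl //= IH.
Qed.

Lemma codeK c : c < 8 -> code (bit 0 c) (bit 1 c) (bit 2 c) = c.
Proof. by do 8! (case: c => [//|c]). Qed.

Lemma exists_S n cs : all (fun c => c < 8) cs -> validR 0 cs 0 -> size cs = n ->
  exists S : {set 'I_3 * 'I_n}, indep12_set (@grid_adj 3 n) S /\ #|S| = sumn (map pop cs).
Proof.
move=> h8 hv hs.
set S := [set x : 'I_3 * 'I_n | bit x.1 (nth 0 cs x.2)].
have mSv i j : mS S i j = (i < 3) && (j < n) && bit i (nth 0 cs j).
  apply/existsP/idP => [[[a b] /andP[]]|/andP[/andP[hi hj] hb]].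
    rewrite inE /= => hb /andP[/eqP<- /eqP<-]; by rewrite !ltn_ord.
  by exists (Ordinal hi, Ordinal hj); rewrite inE /= hb !eqxx.
have colv j : colS S j = nth 0 cs j.
  rewrite /colS !mSv /=; case: (ltnP j n) => hj /=.
    by apply: codeK; apply: (all_nthP 0 h8); rewrite hs.
  by rewrite nth_default // hs.
exists S; split; last by rewrite cardS_sum -sum_nth hs; apply: eq_bigr => j _; rewrite colv.
apply/windowsE => j hj.
have := validR_nth hv (j := j); rewrite hs => /(_ hj).
have -> : nth 0 (0 :: cs) j = colp (colS S) j by case: j {hj} => [|j] //=; rewrite colv.
rewrite nth_rcons !colv; case: ltnP => // h1.
by rewrite (@nth_default _ 0 cs j.+1) //; case: eqP.
Qed.

Definition blk : seq nat := [:: 0; 5; 0; 2].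
Definition build (h : seq nat) (k : nat) (t : seq nat) := h ++ (flatten (nseq k blk) ++ t).

Lemma mid k t : head 0 t = 0 -> validR 2 t 0 ->
  validR 2 (flatten (nseq k blk) ++ t) 0 /\ head 0 (flatten (nseq k blk) ++ t) = 0.
Proof.
move=> ht hv; elim: k => [|k [IH1 IH2]] //=.
by rewrite IH2 IH1.
Qed.

Lemma build_ok h k t : validR 0 h 0 -> last 0 h = 2 -> head 0 t = 0 -> validR 2 t 0 ->
  all (fun c => c < 8) h -> all (fun c => c < 8) t ->
  [/\ validR 0 (build h k t) 0, all (fun c => c < 8) (build h k t),
      size (build h k t) = size h + 4 * k + size t &
      sumn (map pop (build h k t)) = sumn (map pop h) + 3 * k + sumn (map pop t)].
Proof.
move=> hv hl ht hvt a1 a2; have [m1 m2] := mid k ht hvt.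
rewrite /build validR_cat m2 hv hl m1 !all_cat a1 a2 !size_cat !map_cat !sumn_cat.
have sz : size (flatten (nseq k blk)) = 4 * k.
  elim: k {m1 m2} => //= k IH; rewrite ?size_cat IH /=; lia.
have sm : sumn (map pop (flatten (nseq k blk))) = 3 * k.
  elim: k {m1 m2 sz} => //= k IH; rewrite ?map_cat ?sumn_cat IH /=; change (3 + 3 * k = 3 * k.+1); lia.
split => //; last by lia.
- by elim: k {m1 m2 sz sm} => //= k ->.
- lia.
Qed.

Theorem mainTheorem4 (n : nat) (hn : 3 <= n) :
  i12_number_is (@grid_adj 3 n)
    (if n %% 4 == 2 then (3 * n + 8) %/ 4 else (3 * n + 4) %/ 4).
Proof.
split.
  have ex : forall h t k, validR 0 h 0 -> last 0 h = 2 -> head 0 t = 0 -> validR 2 t 0 ->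
      all (fun c => c < 8) h -> all (fun c => c < 8) t ->
      size h + 4 * k + size t = n ->
      sumn (map pop h) + 3 * k + sumn (map pop t) = Ff n ->
      exists S : {set 'I_3 * 'I_n}, indep12_set (@grid_adj 3 n) S /\ #|S| = Ff n.
    move=> h t k a b c d e f g1 g2.
    have [v1 v2 v3 v4] := build_ok k a b c d e f.
    have [S [hS cS]] := exists_S v2 v1 (etrans v3 g1).
    by exists S; rewrite cS v4.
  rewrite -/(Ff n).
  have hr : n %% 4 < 4 by apply: ltn_pmod.
  case e : (n %% 4) hr => [|[|[|[|r]]]] // _.
  - apply: (ex [:: 1; 4; 1; 2] [::] ((n - 4) %/ 4)) => //.
      by rewrite /=; lia.
    rewrite (_ : sumn (map pop [:: 1; 4; 1; 2]) = 4) // (_ : sumn (map pop [::]) = 0) //.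
    rewrite /Ff e /=; lia.
  - apply: (ex [:: 2] [::] ((n - 1) %/ 4)) => //.
      by rewrite /=; lia.
    rewrite (_ : sumn (map pop [:: 2]) = 1) // (_ : sumn (map pop [::]) = 0) //.
    rewrite /Ff e /=; lia.
  - apply: (ex [:: 1; 4; 1; 2] [:: 0; 5] ((n - 6) %/ 4)) => //.
      by rewrite /=; lia.
    rewrite (_ : sumn (map pop [:: 1; 4; 1; 2]) = 4) // (_ : sumn (map pop [:: 0; 5]) = 2) //.
    rewrite /Ff e /=; lia.
  - apply: (ex [:: 2] [:: 0; 5] ((n - 3) %/ 4)) => //.
      by rewrite /=; lia.
    rewrite (_ : sumn (map pop [:: 2]) = 1) // (_ : sumn (map pop [:: 0; 5]) = 2) //.
    rewrite /Ff e /=; lia.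
move=> S hS.
have := lb (col := colS S) (n := n) (fun j => code_lt _ _ _).
rewrite ans_F // -cardS_sum /= => -> //.
- by move=> j hj; rewrite /colS !mS_out // hj orbT.
- by move/windowsE: hS.
- lia.
Qed.
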